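(* Let $(G,+)$ be an abelian group of order $n$ with a subgroup $H$ of order $h$. Suppose there exists an HDM$(k,n;h)$ over $G$ with hole $H$, and there exists a DCA$(k,h+1;h)$ over $H$ satisfying P1 and P2. Then there exists a DCA$(k,n+1;n)$ over $G$ satisfying P1 and P2. Moreover, if the HDM$(k,n;h)$ and the DCA$(k,h+1;h)$ are cyclic, then there exists a cyclic DCA$(k,n+1;n)$ satisfying P1 and P2.
   Context: A holey difference matrix HDM$(k,n;h)$ over an abelian group $(G,+)$ of order $n$ with hole a subgroup $H$ of order $h$ is an $(n-h)\times k$ matrix $Q=[q(i,j)]$ with entries in $G$ such that for every pair of distinct columns $j,j'$ the multiset $\{q(i,j)-q(i,j') : 0\le i\le n-h-1\}$ contains every element of $G\setminus H$ exactly once; it may be normalized so that its last column is all $0$. It is cyclic if $G=\mathbb{Z}_n$ (and then $H$ is the subgroup of $\mathbb{Z}_n$ of order $h$). A difference covering array DCA$(k,\eta;n)$ over an abelian group $G$ of order $n$ is an $\eta\times k$ matrix with entries in $G$ such that for every pair of distinct columns $j,j'$ the multiset of row differences $q(i,j)-q(i,j')$ contains every element of $G$ at least once; it is cyclic if $G=\mathbb{Z}_n$. A DCA$(k,n+1;n)$ is taken in normalized form: all entries of its last row (row $n$) and last column (column $k-1$) equal $0$. It satisfies P1 if $0$ occurs at least twice in every column, and P2 if for all distinct columns $j,j'$ with $j\neq k-1\neq j'$, the set $\{q(i,j)-q(i,j') : 0\le i\le n-1\}$ equals $G\setminus\{0\}$. *)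

(* Defs.v *)
From HB Require Import structures.
From mathcomp Require Import all_boot all_order all_algebra.
Set Implicit Arguments. Unset Strict Implicit. Unset Printing Implicit Defensive.
Import GRing.Theory.
Local Open Scope ring_scope.

(* Abelian groups of finite order are finZmodType's (written additively).
   A subgroup H is a set S with zmod_closed S (library notion). *)

Definition is_HDM (G : finZmodType) (H : {set G}) (m k : nat)
    (Q : 'M[G]_(m, k)) : Prop :=
  forall j j' : 'I_k, j != j' ->
    forall g : G, g \notin H -> #|[set i : 'I_m | Q i j - Q i j' == g]| = 1%N.

Definition is_DCA (G : finZmodType) (S : {set G}) (eta k : nat)
    (Q : 'M[G]_(eta, k)) : Prop :=
  (forall i j, Q i j \in S) /\
  (forall j j' : 'I_k, j != j' ->
    forall g, g \in S -> exists i : 'I_eta, Q i j - Q i j' = g).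

Definition DCA_normalized (G : finZmodType) (m k : nat)
    (Q : 'M[G]_(m.+1, k)) : Prop :=
  forall (i : 'I_m.+1) (j : 'I_k), (nat_of_ord i == m) || (j.+1 == k)%N -> Q i j = 0.

Definition DCA_P1 (G : finZmodType) (eta k : nat) (Q : 'M[G]_(eta, k)) : Prop :=
  forall j : 'I_k, (1 < #|[set i : 'I_eta | Q i j == 0%R]|)%N.

Definition DCA_P2 (G : finZmodType) (S : {set G}) (m k : nat)
    (Q : 'M[G]_(m.+1, k)) : Prop :=
  forall j j' : 'I_k, j != j' -> (j.+1 != k)%N -> (j'.+1 != k)%N ->
    [set Q i j - Q i j' | i : 'I_m.+1 & (i < m)%N] = S :\ 0.

Definition DCA_P12 (G : finZmodType) (S : {set G}) (m k : nat)
    (Q : 'M[G]_(m.+1, k)) : Prop :=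
  [/\ is_DCA S Q, DCA_normalized Q, DCA_P1 Q & DCA_P2 S Q].

(* Main.v *)
Require Import Defs.
From HB Require Import structures.
From mathcomp Require Import all_boot all_order all_algebra.
Import GRing.Theory.
Local Open Scope ring_scope.
From mathcomp Require Import fingroup cyclic zify.

Lemma hdm_out (G : finZmodType) (H : {set G}) (M k : nat) (Q : 'M[G]_(M, k)) :
  #|~: H| = M -> is_HDM H Q -> forall j j', j != j' -> forall i, Q i j - Q i j' \notin H.
Proof.
move=> cH hQ j j' jj' i.
pose f i := Q i j - Q i j'.
pose A := [set i | f i \notin H].
have sub : ~: H \subset f @: A.
  apply/subsetP=> g; rewrite inE => gH.
  have := hQ j j' jj' g gH.
  case: (set_0Vmem [set i : 'I_M | Q i j - Q i j' == g]) => [->|[i0]]; first by rewrite cards0.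
  rewrite inE => /eqP e _. apply/imsetP; exists i0 => //. by rewrite inE /f e.
have cA : (#|~: H| <= #|A|)%N.
  exact: leq_trans (subset_leq_card sub) (leq_imset_card _ _).
have : A == setT by rewrite eqEcard subsetT cardsT card_ord -[X in (X <= _)%N]cH.
by move/eqP/setP/(_ i); rewrite !inE.
Qed.


Lemma part1 (G : finZmodType) (H : {set G}) (k N m : nat) :
  0 \in H -> #|G| = N -> #|H| = m ->
  (exists Q : 'M[G]_(N - m, k), is_HDM H Q) ->
  (exists D : 'M[G]_(m.+1, k), DCA_P12 H D) ->
  exists D : 'M[G]_(N.+1, k), DCA_P12 [set: G] D.
Proof.
move=> H0 cG cHm [Q hQ] [D [[entD covD] normD P1D P2D]].
have mN : (m <= N)%N by rewrite -cG -cHm max_card.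
have cH : #|~: H| = (N - m)%N by rewrite cardsCs setCK cG cHm.
case: k Q D hQ entD covD normD P1D P2D => [|k] Q D hQ entD covD normD P1D P2D.
  exists 0; split.
  - by split=> [i j|[]].
  - by move=> i [].
  - by case.
  - by case.
set M := (N - m)%N.
pose E : 'M[G]_(N.+1, k.+1) := \matrix_(i < N.+1, j < k.+1)
  if (insub (nat_of_ord i) : option 'I_M) is Some i0 then Q i0 j - Q i0 ord_max
  else D (inord (i - M)) j.
have EQ : forall (i0 : 'I_M) j, E (inord i0) j = Q i0 j - Q i0 ord_max.
  move=> i0 j; have lt := ltn_ord i0.
  rewrite mxE; case: insubP => [i1 _ e|].
    have -> : i1 = i0 by apply: val_inj; rewrite e inordK //; lia.
    by [].
  rewrite inordK; lia.
have ED : forall (i0 : 'I_m.+1) j, E (inord (M + i0)) j = D i0 j.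
  move=> i0 j; have lt := ltn_ord i0.
  rewrite mxE; case: insubP => [i1 lt1 e|_].
    by move: lt1; rewrite inordK; lia.
  congr (D _ j); apply: val_inj; rewrite /= !inordK; lia.
have diffE : forall (i0 : 'I_M) j j', E (inord i0) j - E (inord i0) j' = Q i0 j - Q i0 j'.
  by move=> i0 j j'; rewrite !EQ opprB addrA subrK.
exists E; split.
- split; first by move=> *; rewrite inE.
  move=> j j' jj' g _. case: (boolP (g \in H)) => gH.
    have [i0 e] := covD j j' jj' g gH. by exists (inord (M + i0)); rewrite !ED.
  have := hQ j j' jj' g gH.
  case: (set_0Vmem [set i : 'I_M | Q i j - Q i j' == g]) => [->|[i0]]; first by rewrite cards0.
  rewrite inE => /eqP e _. by exists (inord i0); rewrite diffE.
- move=> i j /orP[/eqP iN | /eqP jk].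
    rewrite mxE; case: insubP => [i1 lt1 e|_].
      have := ltn_ord i1; lia.
    apply: normD; rewrite inordK; lia.
  rewrite mxE; case: insubP => [i1 _ _|_].
    have -> : j = ord_max by apply: val_inj => /=; lia.
    by rewrite subrr.
  by apply: normD; apply/orP; right; apply/eqP.
- move=> j. have := P1D j. move/leq_trans; apply.
  pose f (i0 : 'I_m.+1) : 'I_N.+1 := inord (M + i0).
  have finj : injective f.
    move=> a b; have := ltn_ord a; have := ltn_ord b => la lb.
    rewrite /f => /(congr1 val); rewrite /= !inordK; [|lia|lia]. move=> e; apply: ord_inj; lia.
  rewrite -(card_imset _ finj). apply: subset_leq_card.
  apply/subsetP => x /imsetP [i0]; rewrite inE => /eqP z ->.
  by rewrite inE /f ED z.
- move=> j j' jj' jk j'k. apply/setP => g.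
  apply/imsetP/idP => [[i]|].
    rewrite inE => iN ->. rewrite !inE andbT.
    case: (ltnP i M) => iM.
      pose i0 : 'I_M := Ordinal iM.
      have -> : i = inord i0 by apply: val_inj; rewrite /= inordK //; lia.
      rewrite diffE. have := @hdm_out G H M k.+1 Q cH hQ j j' jj' i0.
      by case: eqP => // ->; rewrite H0.
    pose i0 : 'I_m.+1 := inord (i - M).
    have -> : i = inord (M + i0) by apply: val_inj; rewrite /= !inordK; lia.
    rewrite !ED.
    have : D i0 j - D i0 j' \in H :\ 0.
      rewrite -(P2D j j' jj' jk j'k); apply/imsetP; exists i0 => //.
      rewrite inE /= inordK; lia.
    by rewrite !inE => /andP[].
  rewrite !inE andbT => gn0.
  case: (boolP (g \in H)) => gH.
    have : g \in H :\ 0 by rewrite !inE gn0.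
    rewrite -(P2D j j' jj' jk j'k) => /imsetP [i0]; rewrite inE => i0m ->.
    exists (inord (M + i0)); last by rewrite !ED.
    rewrite inE inordK; lia.
  have := hQ j j' jj' g gH.
  case: (set_0Vmem [set i : 'I_M | Q i j - Q i j' == g]) => [->|[i0]]; first by rewrite cards0.
  rewrite inE => /eqP e _. exists (inord i0); last by rewrite diffE.
  have lt : (i0 < N)%N := leq_trans (ltn_ord i0) (leq_subr _ _).
  by rewrite inE inordK // ltnS ltnW.
Qed.

Lemma gen_sub (n : nat) (H : {set 'I_n.+1}) : zmod_closed H ->
  exists x : 'I_n.+1, (forall m : nat, x *+ m \in H) /\ #[x]%g = #|H| /\
    (forall y, y \in H -> exists m : nat, y = x *+ m).
Proof.
case=> H0 HB.
have HN : forall x, x \in H -> - x \in H by move=> x xH; rewrite -sub0r HB.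
have gH : group_set H.
  apply/group_setP; split; first exact: H0.
  move=> x y xH yH. have := HB x (-y) xH (HN _ yH). by rewrite opprK.
pose G := Group gH.
have cT : cyclic [set: 'I_n.+1] by rewrite Zp_cycle cycle_cyclic.
have : cyclic G by apply: cyclicS (subsetT G) cT.
case/cyclicP=> x defG.
have eH : H = <[x]>%g by rewrite -defG.
exists x. split.
  by move=> m; rewrite Zp_mulrn -Zp_expg eH mem_cycle.
split; first by rewrite eH.
move=> y; rewrite eH => /cycleP [m ->]. exists m. by rewrite Zp_expg Zp_mulrn.
Qed.

Theorem mainTheorem6 :
  (forall (G : finZmodType) (H : {set G}) (k : nat),
      zmod_closed H ->
      (exists Q : 'M[G]_(#|G| - #|H|, k), is_HDM H Q) ->
      (exists D : 'M[G]_(#|H|.+1, k), DCA_P12 H D) ->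
      exists D : 'M[G]_(#|G|.+1, k), DCA_P12 [set: G] D)
  /\
  (* cyclic case: G = Z_(n+1), H its subgroup of order h+1 *)
  (forall (n h k : nat) (H : {set 'I_n.+1}),
      zmod_closed H -> #|H| = h.+1 ->
      (exists Q : 'M['I_n.+1]_(n.+1 - h.+1, k), is_HDM H Q) ->
      (exists D : 'M['I_h.+1]_(h.+2, k), DCA_P12 [set: 'I_h.+1] D) ->
      exists D : 'M['I_n.+1]_(n.+2, k), DCA_P12 [set: 'I_n.+1] D).
Proof.
split.
  move=> G H k Hc hQ hD. have H0 : (0 : G) \in H by case: Hc.
  exact: (@part1 G H k #|G| #|H| H0 erefl erefl hQ hD).
move=> n h k H Hc cH hQ [D [[_ covD] normD P1D P2D]].
have [x [xmem [ox xgen]]] := @gen_sub n H Hc.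
rewrite cH in ox.
pose phi (a : 'I_h.+1) : 'I_n.+1 := x *+ a.
have modE : forall m : nat, x *+ (m %% h.+1) = x *+ m.
  by move=> m; rewrite !Zp_mulrn -!Zp_expg -ox expg_mod_order.
have phiD : forall a b, phi (a + b) = phi a + phi b.
  move=> a b; rewrite /phi -mulrnDr -[in RHS]modE.
  by [].
have phi0 : phi 0 = 0 by rewrite /phi mulr0n.
have phiB : forall a b, phi (a - b) = phi a - phi b.
  move=> a b; apply/eqP; rewrite eq_sym subr_eq -phiD subrK //.
have phiinj : injective phi.
  move=> a b; rewrite /phi !Zp_mulrn -!Zp_expg => /eqP.
  rewrite eq_expg_mod_order ox !modn_small // => /eqP e; exact: ord_inj.
have phisurj : forall y, y \in H -> exists a, y = phi a.
  move=> y /xgen [m ->]; exists (inord (m %% h.+1)).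
  by rewrite /phi inordK ?modE // ltn_pmod.
have phi0E : forall a, (phi a == 0) = (a == 0) by move=> a; rewrite -phi0 (inj_eq phiinj).
pose D' := map_mx phi D.
have hD' : DCA_P12 H D'.
  split.
  - split; first by move=> i j; rewrite mxE xmem.
    move=> j j' jj' g /phisurj [a ->].
    have [i e] := covD j j' jj' a (in_setT a).
    by exists i; rewrite !mxE -phiB e.
  - by move=> i j c; rewrite mxE normD.
  - move=> j.
    have -> : [set i | D' i j == 0] = [set i | D i j == 0].
      by apply/setP => i; rewrite !inE mxE phi0E.
    exact: P1D.
  - move=> j j' jj' jk j'k; apply/setP => g.
    apply/imsetP/idP => [[i iC ->]|].
      rewrite !mxE -phiB.
      have : D i j - D i j' \in [set: 'I_h.+1] :\ 0.
        by rewrite -(P2D j j' jj' jk j'k); apply/imsetP; exists i.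
      by rewrite !inE phi0E xmem andbT.
    rewrite !inE => /andP [gn0 /phisurj [a ea]].
    have : a \in [set: 'I_h.+1] :\ 0 by rewrite !inE andbT -phi0E -ea.
    rewrite -(P2D j j' jj' jk j'k) => /imsetP [i iC e].
    by exists i => //; rewrite !mxE -phiB -e.
have H0 : 0 \in H by case: Hc.
exact: (@part1 _ H k n.+1 h.+1 H0 (card_ord n.+1) cH hQ (ex_intro _ D' hD')).
Qed.
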